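(* Let $E_0,E_1,\dots,E_n$ be $S$-scaled vector spaces, let $\tau\in]0,S[$, and for $i=1,\dots,n$ let $u_i:E_i\to E_{i-1}$ be a $k_i$-bounded $\tau$-morphism. Then $u_1\circ\cdots\circ u_n$ is a $k$-bounded $\tau$-morphism with $k=\sum_{i=1}^n k_i$, and $$N_\tau^k(u_1\cdots u_n)\le n^k\prod_{i=1}^n N_\tau^{k_i}(u_i).$$ Moreover, if all $E_i$ equal a single space $E$ and $u_1=\dots=u_n=u$ is $1$-bounded, then $$\frac{N_\tau^n(u^n)}{n!}\le 3^n N_\tau^1(u)^n.$$
   Context: An $S$-scale of Banach spaces is a decreasing family $(E_s)_{s\in]0,S[}$ of Banach spaces with norms $|\cdot|_s$ such that the inclusions $E_{s+\sigma}\subset E_s$ have norm at most $1$. An $S$-scaled vector space is a topological vector space $E=\bigcup_s E_s$ carrying the direct-limit topology of such a scale. A linear map $u:E\to F$ between $S$-scaled spaces is a $\tau$-morphism ($\tau<S$) if for all $s'\in]0,\tau]$ and $s\in]0,s'[$ one has $u(E_{s'})\subset F_s$ with $u:E_{s'}\to F_s$ continuous. A $\tau$-morphism is $k$-bounded if there is $C>0$ with $|u(x)|_s\le C\sigma^{-k}|x|_{s+\sigma}$ for all $s\in]0,\tau[$, $\sigma\in]0,\tau-s]$, $x\in E_{s+\sigma}$; $N_\tau^k(u)$ denotes the smallest such $C$. *)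

(* Defs.v *)
From HB Require Import structures.
From mathcomp Require Import all_boot all_order all_algebra.
From mathcomp Require Import all_classical all_reals all_analysis.
Set Implicit Arguments. Unset Strict Implicit. Unset Printing Implicit Defensive.
Import Order.TTheory GRing.Theory Num.Theory.
Local Open Scope classical_set_scope.
Local Open Scope ring_scope.

(* An S-scaled vector space: ambient vector space E = union of the E_s,
   together with the S-scale of Banach spaces (E_s, |.|_s), s in ]0,S[. *)
Record Sscaled (R : realType) (S : R) := {
  sc_V : lmodType R;
  sc_E : R -> set sc_V;
  sc_norm : R -> sc_V -> R;
  sc_sub0 : forall s, 0 < s < S -> sc_E s 0;
  sc_subL : forall s (a : R) x y, 0 < s < S -> sc_E s x -> sc_E s y ->
              sc_E s (a *: x + y);
  sc_norm_eq0 : forall s x, 0 < s < S -> sc_E s x -> sc_norm s x = 0 -> x = 0;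
  sc_normZ : forall s (a : R) x, 0 < s < S -> sc_E s x ->
              sc_norm s (a *: x) = `|a| * sc_norm s x;
  sc_normD : forall s x y, 0 < s < S -> sc_E s x -> sc_E s y ->
              sc_norm s (x + y) <= sc_norm s x + sc_norm s y;
  sc_complete : forall s (w : nat -> sc_V), 0 < s < S ->
     (forall m, sc_E s (w m)) ->
     (forall e : R, 0 < e -> exists N : nat, forall m p, (N <= m)%N -> (N <= p)%N ->
         sc_norm s (w m - w p) < e) ->
     exists2 l, sc_E s l & forall e : R, 0 < e -> exists N : nat,
         forall m, (N <= m)%N -> sc_norm s (w m - l) < e;
  sc_decr : forall s s' x, 0 < s -> s <= s' -> s' < S -> sc_E s' x -> sc_E s x;
  sc_incl : forall s s' x, 0 < s -> s <= s' -> s' < S -> sc_E s' x ->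
              sc_norm s x <= sc_norm s' x;
  sc_union : forall x, exists s, 0 < s < S /\ sc_E s x
}.

Arguments sc_V {R S} _.
Arguments sc_E {R S} _ _ _.
Arguments sc_norm {R S} _ _ _.

Section Morphisms.
Variables (R : realType) (S : R).

Definition tau_morphism (E F : @Sscaled R S) (tau : R) (u : sc_V E -> sc_V F) :=
  (forall (a : R) x y, u (a *: x + y) = a *: u x + u y) /\
  forall s' s, 0 < s' <= tau -> 0 < s < s' ->
    (forall x, sc_E E s' x -> sc_E F s (u x)) /\
    (forall x, sc_E E s' x -> forall e : R, 0 < e -> exists2 d : R, 0 < d &
        forall y, sc_E E s' y -> sc_norm E s' (y - x) < d ->
          sc_norm F s (u y - u x) < e).

Definition bound_const (E F : @Sscaled R S) (tau k : R) (u : sc_V E -> sc_V F)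
    (C : R) :=
  forall s sigma x, 0 < s < tau -> 0 < sigma <= tau - s -> sc_E E (s + sigma) x ->
    sc_norm F s (u x) <= C * sigma `^ (- k) * sc_norm E (s + sigma) x.

Definition k_bounded (E F : @Sscaled R S) (tau k : R) (u : sc_V E -> sc_V F) :=
  tau_morphism tau u /\ exists2 C : R, 0 < C & bound_const tau k u C.

Definition Nbound (E F : @Sscaled R S) (tau k : R) (u : sc_V E -> sc_V F) : R :=
  inf [set C : R | 0 < C /\ bound_const tau k u C].

Fixpoint compn (E : nat -> @Sscaled R S)
    (u : forall i, sc_V (E i) -> sc_V (E i.-1)) (m : nat) :
    sc_V (E m) -> sc_V (E 0%N) :=
  match m with
  | 0%N => fun x => x
  | m'.+1 => fun x => @compn E u m' (u m'.+1 x)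
  end.
End Morphisms.
Arguments compn {R S E} u m _.

(* Main.v *)
Require Import Defs.
From HB Require Import structures.
From mathcomp Require Import all_boot all_order all_algebra.
From mathcomp Require Import all_classical all_reals all_analysis.
From mathcomp Require Import ring lra zify.
Import Order.TTheory GRing.Theory Num.Theory.
Local Open Scope ring_scope.

Lemma sc_mem_sub (R : realType) (S : R) (E : @Sscaled R S) s x y :
  0 < s < S -> sc_E E s x -> sc_E E s y -> sc_E E s (y - x).
Proof.
move=> hs hx hy; have := sc_subL (-1) hs hx hy.
by rewrite scaleN1r addrC.
Qed.

Lemma sc_norm_ge0 (R : realType) (S : R) (E : @Sscaled R S) s x :
  0 < s < S -> sc_E E s x -> 0 <= sc_norm E s x.
Proof.
move=> hs hx.
have hnx : sc_E E s ((-1) *: x) by rewrite -[_ *: x]addr0; apply: sc_subL => //; exact: sc_sub0.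
have h0 : sc_norm E s 0 = 0.
  by rewrite -(scale0r x) sc_normZ // normr0 mul0r.
have := sc_normD hs hx hnx.
rewrite scaleN1r subrr h0 -scaleN1r sc_normZ // normrN normr1 mul1r.
lra.
Qed.

Lemma prod_powR (R : realType) (d : R) (r : seq nat) (f : nat -> R) (P : pred nat) :
  0 < d -> \prod_(i <- r | P i) d `^ (f i) = d `^ (\sum_(i <- r | P i) f i).
Proof.
move=> hd; elim: r => [|a r IH]; first by rewrite !big_nil powRr0.
rewrite !big_cons; case: (P a) => //.
rewrite IH powRD //; apply/implyP => _; by rewrite gt_eqF.
Qed.

Lemma powRVn (R : realType) (n K : R) : 0 < n -> (n^-1) `^ (- K) = n `^ K.
Proof.
move=> hn.
have h : n `^ K * (n^-1) `^ K = 1.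
  rewrite -powRM ?invr_ge0 ?ltW // mulfV ?gt_eqF // powR1 //.
rewrite powRN.
have -> : (n^-1) `^ K = (n `^ K)^-1.
  apply: (@mulfI _ (n `^ K)); first by rewrite gt_eqF // powR_gt0.
  by rewrite h mulfV // gt_eqF // powR_gt0.
by rewrite invrK.
Qed.

Section Main.
Variables (R : realType) (S : R).

Lemma chain (E : nat -> @Sscaled R S) (u : forall i, sc_V (E i) -> sc_V (E i.-1))
  (tau : R) (k C : nat -> R) (n : nat) :
  0 < tau < S ->
  (forall i, (1 <= i <= n)%N ->
     tau_morphism tau (u i) /\ 0 <= C i /\ bound_const tau (k i) (u i) (C i)) ->
  forall m, (m <= n)%N -> forall s d t x, 0 < s -> 0 < d ->
    s + m%:R * d <= t -> t <= tau -> sc_E (E m) t x ->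
    sc_E (E 0%N) s (compn u m x) /\
    sc_norm (E 0%N) s (compn u m x) <=
      (\prod_(1 <= i < m.+1) (C i * d `^ (- k i))) * sc_norm (E m) t x.
Proof.
move=> /andP[ht0 htS] H; elim=> [|m IH] hmn s d t x hs hd hst htt hx.
  rewrite mul0r addr0 in hst.
  rewrite big_geq // mul1r /=.
  have htS' : t < S by apply: le_lt_trans htS.
  split; [exact: (sc_decr hs hst htS' hx)| exact: (sc_incl hs hst htS' hx)].
have [[lin Hmor] [hC hb]] := H m.+1 hmn.
have hmd : 0 <= m%:R * d by rewrite mulr_ge0 // ltW.
have hst' : s + m%:R * d <= t - d.
  move: hst; rewrite -natr1 mulrDl mul1r; lra.
have hpos : 0 < t - d by lra.
have [hm1 _] := Hmor t (t - d) (ltac:(apply/andP; split => //; lra))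
   (ltac:(apply/andP; split => //; lra)).
have hux := hm1 x hx.
have hbx : sc_norm (E m) (t - d) (u m.+1 x) <=
    C m.+1 * d `^ (- k m.+1) * sc_norm (E m.+1) t x.
  have := hb (t - d) d x (ltac:(apply/andP; split => //; lra))
    (ltac:(apply/andP; split => //; lra)) (ltac:(by rewrite subrK)).
  by rewrite subrK.
have [IH1 IH2] := IH (ltnW hmn) s d (t - d) (u m.+1 x) hs hd hst' (ltac:(lra)) hux.
split; first exact: IH1.
rewrite big_nat_recr //=.
apply: (le_trans IH2).
rewrite -mulrA; apply: ler_wpM2l.
  rewrite big_nat_cond; apply: prodr_ge0 => i /andP[/andP[h1 h2] _].
  have [_ [hCi _]] := H i (ltac:(rewrite h1 /=; rewrite ltnS in h2; exact: leq_trans h2 (ltnW hmn))).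
  by rewrite mulr_ge0 // powR_ge0.
exact: hbx.
Qed.

Arguments chain {E u tau k C n}.

Lemma compn_lin (E : nat -> @Sscaled R S) (u : forall i, sc_V (E i) -> sc_V (E i.-1))
  (n : nat) :
  (forall i, (1 <= i <= n)%N -> forall (a : R) x y, u i (a *: x + y) = a *: u i x + u i y) ->
  forall (a : R) x y, compn u n (a *: x + y) = a *: compn u n x + compn u n y.
Proof.
elim: n => [|n IH] H a x y //=.
have IH' : forall (a : R) x y, compn u n (a *: x + y) = a *: compn u n x + compn u n y.
  apply: IH => i /andP[h1 h2]; apply: H; rewrite h1 /=; exact: leqW.
by rewrite (H n.+1 (leqnn _)) IH'.
Qed.

Lemma bound_up {E F : @Sscaled R S} {tau k : R} {u : sc_V E -> sc_V F} {C C' : R} :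
  0 < tau < S -> bound_const tau k u C -> C <= C' -> bound_const tau k u C'.
Proof.
move=> /andP[_ htS] hb hC s sig x hs hsig hx.
apply: (le_trans (hb s sig x hs hsig hx)).
rewrite -!mulrA; apply: ler_wpM2r => //.
rewrite mulr_ge0 ?powR_ge0 //; apply: sc_norm_ge0 hx.
apply/andP; split; first lra.
apply: le_lt_trans htS; lra.
Qed.

Lemma Nbound_adm {E F : @Sscaled R S} {tau k : R} {u : sc_V E -> sc_V F} :
  0 < tau < S -> (exists2 C : R, 0 < C & bound_const tau k u C) ->
  0 <= Nbound tau k u /\ bound_const tau k u (Nbound tau k u).
Proof.
move=> htau [C hC hbC].
have hne : ([set C : R | 0 < C /\ bound_const tau k u C] !=set0)%classic by exists C.
split.
  apply: lb_le_inf => // c [hc _]; exact: ltW.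
move=> s sig x hs hsig hx.
case/andP: htau => _ htS.
have hb0 : 0 <= sig `^ (- k) * sc_norm E (s + sig) x.
  rewrite mulr_ge0 ?powR_ge0 //; apply: sc_norm_ge0 hx.
  apply/andP; split; first lra.
  apply: le_lt_trans htS; lra.
rewrite -mulrA.
have [e0|hbpos] := eqVneq (sig `^ (- k) * sc_norm E (s + sig) x) 0.
  have := hbC s sig x hs hsig hx; by rewrite -mulrA e0 !mulr0.
have hb : 0 < sig `^ (- k) * sc_norm E (s + sig) x by rewrite lt_def hbpos hb0.
rewrite -ler_pdivrMr //.
apply: lb_le_inf => // c [hc hbc].
rewrite ler_pdivrMr //.
have := hbc s sig x hs hsig hx; by rewrite -mulrA.
Qed.

Lemma split_step (n : nat) (sig : R) : 0 < sig ->
  0 < sig / (maxn n 1)%:R /\ n%:R * (sig / (maxn n 1)%:R) <= sig.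
Proof.
move=> hs; case: n => [|n].
  rewrite /= mul0r; split; [by rewrite divr1 | exact: ltW].
have -> : maxn n.+1 1 = n.+1 by rewrite maxnE /= addn0.
split; first by rewrite divr_gt0 // ltr0n.
by rewrite mulrC -mulrA mulVf ?mulr1 // pnatr_eq0.
Qed.

Lemma dpow (n : nat) (sig K : R) : 0 < sig -> (n = 0%N -> K = 0) ->
  (sig / (maxn n 1)%:R) `^ (- K) = n%:R `^ K * sig `^ (- K).
Proof.
move=> hs; case: n => [|n] hK.
  by rewrite hK // oppr0 !powRr0 mulr1.
have -> : maxn n.+1 1 = n.+1 by rewrite maxnE /= addn0.
by rewrite powRM ?invr_ge0 ?ltW ?ltr0n // powRVn ?ltr0n // mulrC.
Qed.

Lemma part1 (E : nat -> @Sscaled R S) (n : nat) (tau : R) (k : nat -> R)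
          (u : forall i, sc_V (E i) -> sc_V (E i.-1)) :
      0 < tau < S ->
      (forall i, (1 <= i <= n)%N -> k_bounded tau (k i) (u i)) ->
      k_bounded tau (\sum_(1 <= i < n.+1) k i) (compn u n) /\
      Nbound tau (\sum_(1 <= i < n.+1) k i) (compn u n)
        <= n%:R `^ (\sum_(1 <= i < n.+1) k i) *
           \prod_(1 <= i < n.+1) Nbound tau (k i) (u i).
Proof.
move=> htau H.
set K := \sum_(1 <= i < n.+1) k i.
set D := n%:R `^ K * \prod_(1 <= i < n.+1) Nbound tau (k i) (u i).
have HK : n = 0%N -> K = 0 by move=> hn; rewrite /K hn big_geq.
have H' : forall i, (1 <= i <= n)%N ->
     tau_morphism tau (u i) /\ 0 <= Nbound tau (k i) (u i) /\
     bound_const tau (k i) (u i) (Nbound tau (k i) (u i)).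
  move=> i hi; have [hm hex] := H i hi; have [h1 h2] := Nbound_adm htau hex.
  by split.
have hD0 : 0 <= D.
  rewrite mulr_ge0 ?powR_ge0 // big_nat_cond; apply: prodr_ge0 => i /andP[/andP[h1 h2] _].
  have [_ [h _]] := H' i (ltac:(by rewrite h1 /= -ltnS)); exact: h.
have Hb : bound_const tau K (compn u n) D.
  move=> s sig x /andP[hs hst] /andP[hsig hsigt] hx.
  have [hd hnd] := split_step n _ hsig.
  have [_ h2] := chain htau H' n (leqnn n) s (sig / (maxn n 1)%:R) (s + sig) x hs hd (ltac:(lra)) (ltac:(lra)) hx.
  apply: (le_trans h2).
  rewrite big_split /=. rewrite prod_powR //. rewrite GRing.sumrN (dpow n sig K hsig HK).
  rewrite le_eqVlt; apply/orP; left; apply/eqP; rewrite /D; ring.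
have clin := @compn_lin E u n (fun i hi => (H' i hi).1.1).
have Htm : tau_morphism tau (compn u n).
  split => // s' s /andP[hs' hs't] /andP[hs hss'].
  split.
    move=> x hx.
    have hsig : 0 < s' - s by lra.
    have [hd hnd] := split_step n _ hsig.
    have [h1 _] := chain htau H' n (leqnn n) s ((s' - s) / (maxn n 1)%:R) s' x hs hd (ltac:(lra)) hs't hx.
    exact: h1.
  move=> x hx e he.
  set A := D * (s' - s) `^ (- K).
  have hA : 0 <= A by rewrite mulr_ge0 // powR_ge0.
  exists (e / (A + 1)); first by rewrite divr_gt0 //; lra.
  move=> y hy hyx.
  have hS' : 0 < s' < S by apply/andP; split => //; case/andP: htau => _ ?; lra.
  have hyx' : sc_E (E n) s' (y - x) by apply: sc_mem_sub.
  have -> : compn u n y - compn u n x = compn u n (y - x).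
    by rewrite addrC -scaleN1r -clin scaleN1r addrC.
  have hb := Hb s (s' - s) (y - x) (ltac:(apply/andP; split => //; lra))
     (ltac:(apply/andP; split => //; lra)) (ltac:(by rewrite addrC subrK)).
  have ess : s + (s' - s) = s' by ring.
  rewrite ess -/A in hb.
  apply: (le_lt_trans hb).
  apply: (@le_lt_trans _ _ (A * (e / (A + 1)))).
    by apply: ler_wpM2l => //; apply: ltW.
  rewrite mulrA ltr_pdivrMr; last lra.
  by rewrite mulrC ltr_pM2l //; lra.
have Hle : forall e : R, 0 < e -> Nbound tau K (compn u n) <= D + e.
  move=> e he; apply: ge_inf.
    by exists 0 => c [hc _]; exact: ltW.
  split; first lra.
  apply: bound_up Hb _ => //; lra.
split.
  split => //; exists (D + 1); first lra.
  apply: bound_up Hb _ => //; lra.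
by apply/ler_addgt0Pr.
Qed.
End Main.

Lemma expR1_le3 (R : realType) : expR (1 : R) <= 3.
Proof.
have h1 : 1 + (- 6^-1) <= expR (- 6^-1 : R) by apply: expR_ge1Dx.
have h6 : expR (1 : R) = expR (6^-1) ^+ 6.
  by rewrite -expRM_natl mulfV // pnatr_eq0.
have hp : 0 < expR (6^-1 : R) by apply: expR_gt0.
have hx : expR (6^-1 : R) <= 6 / 5.
  rewrite expRN in h1.
  have hm : expR (6^-1 : R) * (expR (6^-1))^-1 = 1 by rewrite mulfV // gt_eqF.
  have e56 : (1 + - 6^-1 : R) = 5 / 6 by field.
  rewrite e56 in h1.
  move: h1 hm hp; generalize (expR (6^-1 : R)) => y.
  generalize (y^-1) => z h1 hm hy; nra.
rewrite h6.
apply: (le_trans (lerXn2r 6 _ _ hx)); rewrite ?nnegrE ?ltW //; last lra.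
Qed.

Lemma fact_bound (R : realType) (n : nat) : (n%:R : R) ^+ n / n`!%:R <= 3 ^+ n.
Proof.
case: n => [|m]; first by rewrite !expr0 fact0 divr1.
have := @expR_ge1Dxn R (m.+1)%:R m (ler0n _ _).
rewrite -[X in expR X]mulr1 expRM_natl => h.
have h3 : expR (1 : R) ^+ m.+1 <= 3 ^+ m.+1.
  apply: lerXn2r; rewrite ?nnegrE; [exact: ltW (expR_gt0 _) | lra | exact: expR1_le3].
lra.
Qed.

Theorem proposition2 (R : realType) (S : R) :
  (forall (E : nat -> @Sscaled R S) (n : nat) (tau : R) (k : nat -> R)
          (u : forall i, sc_V (E i) -> sc_V (E i.-1)),
      0 < tau < S ->
      (forall i, (1 <= i <= n)%N -> k_bounded tau (k i) (u i)) ->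
      k_bounded tau (\sum_(1 <= i < n.+1) k i) (compn u n) /\
      Nbound tau (\sum_(1 <= i < n.+1) k i) (compn u n)
        <= n%:R `^ (\sum_(1 <= i < n.+1) k i) *
           \prod_(1 <= i < n.+1) Nbound tau (k i) (u i)) /\
  (forall (E : @Sscaled R S) (n : nat) (tau : R) (u : sc_V E -> sc_V E),
      0 < tau < S ->
      k_bounded tau 1 u ->
      Nbound tau n%:R (iter n u) / n`!%:R <= 3 ^+ n * Nbound tau 1 u ^+ n).
Proof.
split.
  by move=> E n tau k u htau H; apply: part1.
move=> E n tau u htau hu.
have [_ h] := @part1 R S (fun _ : nat => E) n tau (fun _ => 1) (fun _ => u) htau (fun i _ => hu).
rewrite sumr_const_nat prodr_const_nat subn1 /= powR_mulrn ?ler0n // in h.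
have ec : compn (E := fun _ : nat => E) (fun _ => u) n = iter n u.
  apply: funext => x; elim: n x {h} => //= n IH x; by rewrite IH -iterSr.
rewrite ec in h.
have [hN0 _] := @Nbound_adm R S E E tau 1 u htau hu.2.
apply: (@le_trans _ _ ((n%:R ^+ n * Nbound tau 1 u ^+ n) / n`!%:R)).
  by apply: ler_wpM2r => //; rewrite invr_ge0 ler0n.
rewrite mulrAC; apply: ler_wpM2r; first exact: exprn_ge0.
exact: fact_bound.
Qed.
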